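(* For integers $a\ge 1$ and $n\ge 2$, the modified wheel graph $\overline{W}_n$ satisfies $$t(\overline{W}_n)=a\,W_{n-1}(a).$$ In particular, for $a=1$, $t(W_n)=L_{2n}-2$, where $L_k$ is the $k$-th Lucas number.
   Context: $t(H)$ is the number of spanning trees of $H$. The cycle graph $C_n$ ($n\ge 2$) has vertices $p_1,\dots,p_n$ and edges joining $p_i$ to $p_{i+1}$ (indices mod $n$; $C_2$ has two parallel edges). The modified wheel graph $\overline{W}_n$ is obtained from $C_n$ by adding a new vertex $p$ joined to each vertex $p_j$ by $a\ge 1$ parallel edges; for $a=1$ it is the wheel graph $W_n$. The polynomials $W_n(x)$ are defined by $W_0(x)=1$, $W_1(x)=x+4$, $W_n(x)=(x+2)W_{n-1}(x)-W_{n-2}(x)+2$ for $n\ge 2$. Lucas numbers: $L_1=1$, $L_2=3$, $L_k=L_{k-1}+L_{k-2}$. *)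

(* Defs.v *)
From HB Require Import structures.
From mathcomp Require Import all_boot all_order all_algebra.
Set Implicit Arguments. Unset Strict Implicit. Unset Printing Implicit Defensive.
Import Order.TTheory GRing.Theory Num.Theory.

(** A finite multigraph: a finite vertex type [V], a finite edge type [E]
    and an endpoint map [ends : E -> V * V] (parallel edges allowed). *)

Definition adj_in (V E : finType) (ends : E -> V * V) (S : {set E}) : rel V :=
  fun x y => [exists e in S, (ends e == (x, y)) || (ends e == (y, x))].

Definition connected_in (V E : finType) (ends : E -> V * V) (S : {set E}) : bool :=
  [forall x : V, forall y : V, connect (adj_in ends S) x y].

(** S is (the edge set of) a spanning tree: (V,S) is connected and minimally
    so, i.e. connected with every edge a bridge (= connected and acyclic). *)
Definition spanning_tree (V E : finType) (ends : E -> V * V) (S : {set E}) : bool :=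
  connected_in ends S && [forall e in S, ~~ connected_in ends (S :\ e)].

Definition num_spanning_trees (V E : finType) (ends : E -> V * V) : nat :=
  #|[set S : {set E} | spanning_tree ends S]|.

(** Modified wheel graph: vertices [None] = hub p, [Some j] = p_{j+1};
    edges [inl i] : p_{i+1} -- p_{i+2} (indices mod n),
          [inr (j,k)] : k-th of the a parallel edges hub -- p_{j+1}. *)
Definition wheel_V (n : nat) : finType := option 'I_n.
Definition wheel_E (a n : nat) : finType := ('I_n + ('I_n * 'I_a))%type.

Definition wheel_ends (a n : nat) (e : wheel_E a n) : wheel_V n * wheel_V n :=
  match e with
  | inl i => (Some i, Some (ordS i))
  | inr jk => (None, Some jk.1)
  end.

Definition t_wheel (a n : nat) : nat := num_spanning_trees (@wheel_ends a n).

Local Open Scope ring_scope.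
Fixpoint Wpoly (n : nat) : {poly int} :=
  match n with
  | 0%N => 1
  | 1%N => 'X + 4%:P
  | S ((S m) as k) => ('X + 2%:P) * Wpoly k - Wpoly m + 2%:P
  end.
Local Close Scope ring_scope.

Fixpoint lucas (k : nat) : nat :=
  match k with
  | 0 => 2
  | 1 => 1
  | S ((S m) as j) => lucas j + lucas m
  end.

(* Main.v *)
Require Import Defs.
From HB Require Import structures.
From mathcomp Require Import all_boot all_order all_algebra.
From mathcomp Require Import zify ring.
From Stdlib Require ClassicalEpsilon.
Import Order.TTheory GRing.Theory Num.Theory.
Set Implicit Arguments. Unset Strict Implicit. Unset Printing Implicit Defensive.

Section Iter.
Variable n : nat.
Definition it (k : nat) (v : 'I_n) := iter k (@ordS n) v.

Lemma itS k v : it k.+1 v = ordS (it k v).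
Proof. by rewrite /it iterS. Qed.
Lemma itSr k v : it k.+1 v = it k (ordS v).
Proof. by rewrite /it iterSr. Qed.

Lemma it_val k v : nat_of_ord (it k v) = (v + k) %% n.
Proof.
elim: k => [|k IH]; first by rewrite addn0 modn_small.
by rewrite itS /= IH -addn1 modnDml addn1 addnS.
Qed.

Lemma it_n v : it n v = v.
Proof. by apply: val_inj => /=; rewrite it_val modnDr modn_small. Qed.

Lemma it_cover u w : exists2 k, k < n & it k u = w.
Proof.
exists ((w + n - u) %% n); first by rewrite ltn_mod; case: (w) => /= m; lia.
apply: val_inj => /=; rewrite it_val modnDmr.
have -> : u + (w + n - u) = w + n by case: u => /= m; lia.
by rewrite modnDr modn_small.
Qed.

Lemma it_neq k v : 0 < k < n -> it k v != v.
Proof.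
move=> /andP [k0 kn]; apply/negP => /eqP /(congr1 (@nat_of_ord n)); rewrite it_val.
case: (ltnP (v + k) n) => H.
  by rewrite modn_small //; lia.
have -> : v + k = (v + k - n) + n by lia.
rewrite modnDr modn_small; first lia.
case: v H => /= m; lia.
Qed.

Lemma it_inj k : injective (it k).
Proof. elim: k => [|k IH] u w //; rewrite !itS => /ordS_inj; exact: IH. Qed.

Lemma itD j k v : it (j + k) v = it j (it k v).
Proof. by rewrite /it iterD. Qed.

End Iter.

Section Graph.
Variables a n : nat.
Notation V := (wheel_V n).
Notation E := (wheel_E a n).
Notation ends := (@wheel_ends a n).
Notation adj S := (adj_in ends S).

Lemma adj_sym (S : {set E}) : symmetric (adj S).
Proof.
move=> x y; apply/existsP/existsP => -[e /andP [eS H]]; exists e; by rewrite eS /= orbC.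
Qed.

Lemma adj_rim (S : {set E}) i : (inl i : E) \in S -> adj S (Some i) (Some (ordS i)).
Proof. by move=> H; apply/existsP; exists (inl i); rewrite H /= eqxx. Qed.

Lemma adj_sp (S : {set E}) v k : (inr (v, k) : E) \in S -> adj S None (Some v).
Proof. by move=> H; apply/existsP; exists (inr (v, k)); rewrite H /= eqxx. Qed.

Lemma conn_sym (S : {set E}) x y : connect (adj S) x y -> connect (adj S) y x.
Proof. by rewrite (sym_connect_sym (adj_sym S)). Qed.

Lemma closedP (S : {set E}) (X : V -> Prop) :
  (forall i, (inl i : E) \in S -> (X (Some i) <-> X (Some (ordS i)))) ->
  (forall v k, (inr (v, k) : E) \in S -> (X None <-> X (Some v))) ->
  forall x y, connect (adj S) x y -> X x -> X y.
Proof.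
move=> Hl Hr x y /connectP [p]; elim: p x => [|z p IH] x /=; first by move=> _ ->.
case/andP => Hxz Hp Hy Xx; apply: (IH z Hp Hy).
case/existsP: Hxz => e /andP [eS He].
case: e eS He => [i|[v k]] eS /= /orP [] /eqP H; case: H => ? ?; subst.
- by apply/(Hl _ eS).
- by apply/(Hl _ eS).
- by apply/(Hr _ _ eS).
- by apply/(Hr _ _ eS).
Qed.

Lemma connected_hub (S : {set E}) :
  (forall v, connect (adj S) (Some v) None) -> connected_in ends S.
Proof.
move=> H; apply/forallP => x; apply/forallP => y.
have Hh : forall z, connect (adj S) z None by case => [v|]; [exact: H | exact: connect0].
apply: connect_trans (Hh x) _; rewrite (sym_connect_sym (adj_sym S)); exact: Hh.
Qed.

Lemma rpath_connect (S : {set E}) u k :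
  (forall j, j < k -> (inl (it j u) : E) \in S) -> connect (adj S) (Some u) (Some (it k u)).
Proof.
elim: k => [|k IH] H; first exact: connect0.
apply: connect_trans (IH (fun j hj => H j (ltnW hj))) _.
by apply: connect1; rewrite itS; apply: adj_rim; apply: H.
Qed.

Lemma nonbridge (S : {set E}) e : e \in S -> connected_in ends S ->
  connect (adj (S :\ e)) (ends e).1 (ends e).2 -> connected_in ends (S :\ e).
Proof.
move=> eS Hc He; apply/forallP => x; apply/forallP => y.
have := forallP (forallP Hc x) y; apply: connect_sub => u w /existsP [f /andP [fS Hf]].
case: (eqVneq f e) => [ef | fe].
- subst f; case/orP: Hf => /eqP Hf; rewrite Hf /= in He => //.
  by rewrite (sym_connect_sym (adj_sym _)).
- by apply: connect1; apply/existsP; exists f; rewrite !inE fe fS Hf.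
Qed.

End Graph.

Section Cons.
Variables a n : nat.
Notation V := (wheel_V n).
Notation E := (wheel_E a n).
Notation ends := (@wheel_ends a n).
Notation adj S := (adj_in ends S).

Definition Rr (S : {set E}) (i : 'I_n) : bool := (inl i : E) \in S.
Definition sp (S : {set E}) (v : 'I_n) : {set 'I_a} := [set k | (inr (v, k) : E) \in S].
Definition cc S v := #|sp S v|.
Definition loc (r : bool) (c x y : nat) : bool :=
  if r then (x + c <= 1) && (y == x + c) else (x + c == 1) && (y == 0).
Definition consw S (s : 'I_n -> nat) :=
  [forall i, loc (Rr S i) (cc S i) (s i) (s (ordS i))].
Definition exc S := [forall i, Rr S i] && [forall v, cc S v == 0].

Lemma cc_pos S v : 0 < cc S v <-> exists k, (inr (v, k) : E) \in S.
Proof.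
rewrite /cc card_gt0; split => [/set0Pn [k]|[k Hk]]; rewrite ?inE; first by exists k.
by apply/set0Pn; exists k; rewrite inE.
Qed.

Section WithS.
Variables (S : {set E}) (s : 'I_n -> nat).
Hypothesis Hc : consw S s.

Lemma cons_le i : s i + cc S i <= 1.
Proof.
have := forallP Hc i; rewrite /loc; case: Rr => /andP [H1 H2] //.
by rewrite (eqP H1).
Qed.

Lemma cons_R i : Rr S i -> s (ordS i) = s i + cc S i.
Proof. by move=> HR; have := forallP Hc i; rewrite /loc HR => /andP [_ /eqP]. Qed.

Lemma cons_nR i : ~~ Rr S i -> s i + cc S i = 1 /\ s (ordS i) = 0.
Proof.
by move=> HR; have := forallP Hc i; rewrite /loc (negbTE HR) => /andP [/eqP -> /eqP ->].
Qed.

Lemma conn_spoke v : 0 < cc S v -> connect (adj S) (Some v) None.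
Proof.
case/cc_pos => k Hk; apply: connect1; rewrite adj_sym; exact: adj_sp Hk.
Qed.

Lemma conn_back k u : s (it k u) + cc S (it k u) = 1 ->
  connect (adj S) (Some (it k u)) None \/
  (forall j, j <= k -> cc S (it j u) = 0 /\ s (it j u) = 1 /\ (j < k -> Rr S (it j u))).
Proof.
elim: k => [|k IH] H.
  case: (posnP (cc S (it 0 u))) => [c0|cp]; last by left; apply: conn_spoke.
  right => j; rewrite leqn0 => /eqP -> /=; split => //; split => //.
  by rewrite c0 addn0 in H.
case: (posnP (cc S (it k.+1 u))) => [c0|cp]; last by left; apply: conn_spoke.
have s1 : s (it k.+1 u) = 1 by rewrite c0 addn0 in H.
have HR : Rr S (it k u).
  case E0: (Rr S (it k u)) => //; have [_ h] := cons_nR (negbT E0); by rewrite -itS s1 in h.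
have H' : s (it k u) + cc S (it k u) = 1 by rewrite -cons_R // -itS.
case: (IH H') => [Hl|Hr].
  left; apply: connect_trans _ Hl; apply: connect1; rewrite itS adj_sym; exact: adj_rim.
right => j; rewrite leq_eqVlt => /orP [/eqP ->|jk]; first by rewrite ltnn.
have [h1 [h2 h3]] := Hr j jk; split => //; split => // _.
case: (ltnP j k) => [jk'|kj]; first exact: h3.
by have -> : j = k by lia.
Qed.

Lemma conn_fwd k v : s v + cc S v = 0 ->
  connect (adj S) (Some v) None \/
  (forall j, j <= k -> s (it j v) + cc S (it j v) = 0 /\ (j < k -> Rr S (it j v))).
Proof.
move=> H0; elim: k => [|k IH].
  by right => j; rewrite leqn0 => /eqP -> /=.
case: IH => [Hl|Hr]; first by left.
have [Hk _] := Hr k (leqnn k).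
have HR : Rr S (it k v).
  case E0: (Rr S (it k v)) => //; have [h _] := cons_nR (negbT E0); by rewrite Hk in h.
have sS : s (it k.+1 v) = 0 by rewrite itS cons_R //; lia.
case: (posnP (cc S (it k.+1 v))) => [c0|cp].
  right => j; rewrite leq_eqVlt => /orP [/eqP ->|jk]; first by rewrite sS c0 ltnn; split.
  have [h1 h2] := Hr j jk; split => // _.
  case: (ltnP j k) => [jk'|kj]; first exact: h2.
  by have -> : j = k by lia.
left; apply: connect_trans (rpath_connect (S := S) (u := v) (k := k) _) _.
  by move=> j jk; have [_ h] := Hr j (ltnW jk); exact: h.
apply: connect_trans (conn_spoke cp); apply: connect1; rewrite itS; exact: adj_rim.
Qed.

Lemma exc_cover v : (forall j, j < n -> Rr S (it j v) /\ cc S (it j v) = 0) -> exc S.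
Proof.
move=> H; apply/andP; split; apply/forallP => i; have [k kn <-] := it_cover v i;
  have [h1 h2] := H k kn; by rewrite ?h2.
Qed.

Lemma conn_all v : ~~ exc S -> connect (adj S) (Some v) None.
Proof.
move=> nE; have Hle := cons_le v.
have [H|H] : s v + cc S v = 0 \/ s v + cc S v = 1 by lia.
  case: (conn_fwd n H) => // Hr; case/negP: nE; apply: (exc_cover (v := v)) => j jn.
  by have [h1 h2] := Hr j (ltnW jn); split; [apply: h2|lia].
move: H; rewrite -{1 2}(it_n v) => H.
case: (conn_back H) => [|Hr]; first by rewrite it_n.
case/negP: nE; apply: (exc_cover (v := v)) => j jn.
by have [h1 [h2 h3]] := Hr j (ltnW jn); split; [apply: h3|].
Qed.

Lemma cons_connected : ~~ exc S -> connected_in ends S.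
Proof. by move=> nE; apply: connected_hub => v; apply: conn_all. Qed.

End WithS.
End Cons.

Section Bridges.
Variables a n : nat.
Notation V := (wheel_V n).
Notation E := (wheel_E a n).
Notation ends := (@wheel_ends a n).
Notation adj S := (adj_in ends S).
Variables (S : {set E}) (s : 'I_n -> nat).
Hypothesis Hc : consw S s.

Lemma not_conn_X (T : {set E}) (X : V -> Prop) v :
  (forall i, (inl i : E) \in T -> (X (Some i) <-> X (Some (ordS i)))) ->
  (forall v k, (inr (v, k) : E) \in T -> ~ X (Some v)) ->
  X (Some v) -> ~~ connected_in ends T.
Proof.
move=> Hl Hr Xv; apply/negP => /forallP /(_ (Some v)) /forallP /(_ None) Hcon.
pose Y (x : V) := match x with None => False | Some w => X (Some w) end.
have := closedP (X := Y) Hl _ Hcon; apply => //.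
by move=> w k Hk /=; split => // /(Hr _ _ Hk).
Qed.

Lemma bridge_sp w k0 : (inr (w, k0) : E) \in S -> ~~ connected_in ends (S :\ inr (w, k0)).
Proof.
move=> eS.
have cp : 0 < cc S w by apply/cc_pos; exists k0.
have Hle := cons_le Hc w.
have cw : cc S w = 1 by lia.
have sw : s w = 0 by lia.
pose X (x : V) := match x with None => False | Some v =>
  v = w \/
  (exists k, it k v = w /\ forall j, j < k -> Rr S (it j v) /\ s (it j v) = 0 /\ cc S (it j v) = 0) \/
  (exists k, it k w = v /\ forall j, 0 < j <= k -> s (it j w) = 1 /\ cc S (it j w) = 0 /\ Rr S (it j.-1 w)) end.
apply: (not_conn_X (X := X) (v := w)); last by left.
- move=> i; rewrite !inE => /andP [_ HR].
  have Hs := cons_R Hc HR.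
  have Hle' := cons_le Hc (ordS i).
  split => /=.
  + case: (eqVneq i w) => [Ew|iw].
      subst i; right; right; exists 1; split; first by rewrite itS.
      move=> j /andP [j0 j1]; have -> : j = 1 by lia.
      rewrite /= ?itS /=; split; [lia|split; [lia|exact: HR]].
    move=> [Ew|[[k [Hk Hp]]|[k [Hk Hp]]]]; first by rewrite Ew eqxx in iw.
    * case: k Hk Hp => [|[|k]] Hk Hp; first by rewrite -Hk /= eqxx in iw.
        by left; rewrite -Hk itS.
      right; left; exists k.+1; split; first by rewrite -itSr.
      move=> j jk; rewrite -itSr; exact: Hp.
    * case: k Hk Hp => [|k] Hk Hp; first by rewrite -Hk /= eqxx in iw.
      right; right; exists k.+2; split; first by rewrite itS Hk.
      move=> j /andP [j0 jk]; case: (ltnP k.+1 j) => jk'.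
        have -> : j = k.+2 by lia.
        have [h1 [h2 h3]] := Hp k.+1 (leqnn _).
        have -> : k.+2.-1 = k.+1 by []. rewrite (itS k.+1) Hk; rewrite Hk in h1 h2; split; [lia|split; [lia|exact: HR]].
      by apply: Hp; rewrite j0.
  + case: (eqVneq (ordS i) w) => [Ew|iw].
      right; left; exists 1; split; first by rewrite itS.
      move=> j; rewrite ltnS leqn0 => /eqP -> /=; rewrite Ew in Hs; split; [exact: HR|lia].
    move=> [Ew|[[k [Hk Hp]]|[k [Hk Hp]]]]; first by rewrite Ew eqxx in iw.
    * case: k Hk Hp => [|k] Hk Hp; first by rewrite -Hk /= eqxx in iw.
      right; left; exists k.+2; split; first by rewrite itSr.
      case => [|j] jk.
        have [h1 [h2 h3]] := Hp 0 isT; rewrite /= in h2 h3 *; split; [exact: HR|lia].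
      rewrite itSr; exact: Hp.
    * case: k Hk Hp => [|k] Hk Hp; first by rewrite -Hk /= eqxx in iw.
      rewrite itS in Hk; move/ordS_inj: Hk => Hk.
      case: k Hk Hp => [|k] Hk Hp; first by left.
      right; right; exists k.+1; split => // j /andP [j0 jk].
      by apply: Hp; rewrite j0 /=; lia.
- move=> v k; rewrite !inE => /andP [Hne Hk] /=.
  have cv : 0 < cc S v by apply/cc_pos; exists k.
  case: (eqVneq v w) => [Ev|vw].
    subst v; have kk : k != k0 by apply: contra Hne => /eqP ->.
    have : #|[set k; k0]| <= cc S w.
      by apply: subset_leq_card; apply/subsetP => x; rewrite !inE => /orP [] /eqP ->.
    rewrite cards2 kk; lia.
  move=> [Ev|[[k' [Hk' Hp]]|[k' [Hk' Hp]]]]; first by rewrite Ev eqxx in vw.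
  + case: k' Hk' Hp => [|k'] Hk' Hp; first by rewrite -Hk' /= eqxx in vw.
    have [_ [_ h]] := Hp 0 isT; rewrite /= in h; lia.
  + case: k' Hk' Hp => [|k'] Hk' Hp; first by rewrite -Hk' /= eqxx in vw.
    have [_ [h _]] := Hp k'.+1 (leqnn _); rewrite Hk' in h; lia.
Qed.


Lemma bridge_rim i0 : (inl i0 : E) \in S -> ~~ connected_in ends (S :\ inl i0).
Proof.
move=> eS.
have HR0 : Rr S i0 by [].
have Hs0 := cons_R Hc HR0.
have Hle0 := cons_le Hc (ordS i0).
have Hle00 := cons_le Hc i0.
have [H0|H1] : s (ordS i0) = 0 \/ s (ordS i0) = 1 by lia.
- pose X (x : V) := match x with None => False | Some v =>
    exists k, it k v = i0 /\ forall j, j <= k -> s (it j v) = 0 /\ cc S (it j v) = 0 /\ (j < k -> Rr S (it j v)) end.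
  apply: (not_conn_X (X := X) (v := i0)).
  + move=> i; rewrite !inE => /andP [Hne HR]; have Hs := cons_R Hc HR.
    have ii0 : i != i0 by apply: contra Hne => /eqP ->.
    split => /= -[k [Hk Hp]].
      case: k Hk Hp => [|k] Hk Hp; first by rewrite -Hk /= eqxx in ii0.
      exists k; split; first by rewrite -itSr.
      move=> j jk; rewrite -itSr; have := Hp j.+1 jk; by rewrite ltnS.
    exists k.+1; split; first by rewrite itSr.
    case => [|j] jk.
      have [h1 [h2 _]] := Hp 0 isT; rewrite /= in h1 h2 *; split; [lia|split; [lia|by []]].
    by rewrite itSr; apply: Hp.
  + move=> v k; rewrite !inE => /andP [_ Hk] /= [k' [_ Hp]].
    have cv : 0 < cc S v by apply/cc_pos; exists k.
    have [_ [h _]] := Hp 0 isT; rewrite /= in h; lia.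
  + exists 0; split => // j; rewrite leqn0 => /eqP -> /=; lia.
- pose X (x : V) := match x with None => False | Some v =>
    exists k, it k (ordS i0) = v /\ forall j, j <= k -> s (it j (ordS i0)) = 1 /\ cc S (it j (ordS i0)) = 0 /\ (j < k -> Rr S (it j (ordS i0))) end.
  apply: (not_conn_X (X := X) (v := ordS i0)).
  + move=> i; rewrite !inE => /andP [Hne HR]; have Hs := cons_R Hc HR.
    have Hle' := cons_le Hc (ordS i).
    have ii0 : i != i0 by apply: contra Hne => /eqP ->.
    split => /= -[k [Hk Hp]].
      exists k.+1; split; first by rewrite itS Hk.
      move=> j; rewrite leq_eqVlt => /orP [/eqP ->|jk].
        have [h1 [h2 _]] := Hp k (leqnn _); rewrite Hk in h1 h2.
        rewrite itS Hk ltnn; split; [lia|split; [lia|by []]].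
      have [h1 [h2 h3]] := Hp j jk; split => //; split => // _.
      case: (ltnP j k) => [jk'|kj]; first exact: h3.
      have E1 : j = k by lia.
      by rewrite E1 Hk.
    case: k Hk Hp => [|k] Hk Hp.
      by move/ordS_inj: Hk => Hk; rewrite Hk eqxx in ii0.
    rewrite itS in Hk; move/ordS_inj: Hk => Hk.
    exists k; split => // j jk.
    have [h1 [h2 h3]] := Hp j (leqW jk); split => //; split => // jk'.
    by apply: h3; apply: ltnW.
  + move=> v k; rewrite !inE => /andP [_ Hk] /= [k' [Hk' Hp]].
    have cv : 0 < cc S v by apply/cc_pos; exists k.
    have [_ [h _]] := Hp k' (leqnn _); rewrite Hk' in h; lia.
  + exists 0; split => // j; rewrite leqn0 => /eqP -> /=; lia.
Qed.

Lemma cons_tree : ~~ exc S -> spanning_tree ends S.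
Proof.
move=> nE; apply/andP; split; first exact: cons_connected Hc nE.
apply/forall_inP => -[i|[w k]] eS; [exact: bridge_rim | exact: bridge_sp].
Qed.

End Bridges.

Section Tree.
Variables a n : nat.
Notation V := (wheel_V n).
Notation E := (wheel_E a n).
Notation ends := (@wheel_ends a n).
Notation adj S := (adj_in ends S).
Variable S : {set E}.
Hypothesis HT : spanning_tree ends S.

Lemma tree_conn : connected_in ends S.
Proof. by case/andP: HT. Qed.

Lemma tree_nonbridge e : e \in S -> connect (adj (S :\ e)) (ends e).1 (ends e).2 -> False.
Proof.
move=> eS H; case/andP: HT => _ /forall_inP /(_ e eS).
by rewrite (nonbridge eS tree_conn H).
Qed.

Lemma tree_notallR (i0 : 'I_n) : ~ (forall i, Rr S i).
Proof.
move=> HR.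
have n0 : 0 < n by apply: leq_ltn_trans (leq0n _) (ltn_ord i0).
apply: (tree_nonbridge (e := inl i0)) => //=.
  exact: HR.
apply: conn_sym.
have E0 : it n.-1 (ordS i0) = i0 by rewrite -itSr prednK // it_n.
rewrite -{3}E0.
apply: rpath_connect => j jk; rewrite !inE -itSr andbC; apply/andP; split; first exact: HR.
have Hne : it j.+1 i0 != i0 by apply: it_neq; lia.
by apply: contra Hne => /eqP [] E1; apply/eqP; exact: E1.
Qed.

Lemma tree_two_spokes u k1 v k2 k : (inr (u, k1) : E) \in S -> (inr (v, k2) : E) \in S ->
  (u, k1) != (v, k2) -> (forall j, j < k -> Rr S (it j u)) -> it k u = v -> False.
Proof.
move=> H1 H2 Hne Hp Hk.
apply: (tree_nonbridge (e := inr (v, k2))) => //=.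
apply: (@connect_trans _ _ (Some u)).
  apply: connect1; apply: (@adj_sp _ _ _ _ k1); rewrite !inE H1 andbT.
  by apply: contra Hne => /eqP [-> ->].
rewrite -Hk; apply: rpath_connect => j jk; rewrite !inE /=; exact: Hp.
Qed.

Definition Pd (v : 'I_n) := exists u k, 0 < k /\ it k u = v /\ 0 < cc S u /\
  (forall j, j < k -> Rr S (it j u)).

Definition sdef (v : 'I_n) : nat :=
  if ClassicalEpsilon.excluded_middle_informative (Pd v) then 1 else 0.

Lemma sdef1 v : Pd v -> sdef v = 1.
Proof. by rewrite /sdef; case: ClassicalEpsilon.excluded_middle_informative. Qed.
Lemma sdef0 v : ~ Pd v -> sdef v = 0.
Proof. by rewrite /sdef; case: ClassicalEpsilon.excluded_middle_informative. Qed.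

Lemma cc_le1 v : cc S v <= 1.
Proof.
rewrite leqNgt; apply/negP => /card_gt1P [k1 [k2 [H1 H2 H12]]].
rewrite !inE in H1 H2.
apply: (tree_two_spokes (k := 0) H1 H2) => //.
by apply: contra H12 => /eqP [->].
Qed.

Lemma Pd_cc v : Pd v -> cc S v = 0.
Proof.
move=> [u [k [k0 [Hk [cu Hp]]]]].
case: (posnP (cc S v)) => // /cc_pos [k2 H2].
have [k1 H1] := (cc_pos S u).1 cu.
case: (eqVneq u v) => [Euv|uv].
  subst u; case: (ltnP k n) => kn.
    by move: (it_neq v (k := k)); rewrite Hk eqxx k0 kn => /(_ isT).
  exfalso; apply: (tree_notallR v) => i.
  have [j jn <-] := it_cover v i; apply: Hp; lia.
exfalso; apply: (tree_two_spokes H1 H2 _ Hp Hk).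
by apply: contra uv => /eqP [->].
Qed.

Lemma Pd_S v : Pd (ordS v) <-> Rr S v /\ (Pd v \/ 0 < cc S v).
Proof.
split.
  move=> [u [[|k] [k0 [Hk [cu Hp]]]]] //.
  rewrite itS in Hk; move/ordS_inj: Hk => Hk.
  split; first by rewrite -Hk; apply: Hp.
  case: k Hk Hp k0 => [|k] Hk Hp _; first by right; rewrite -Hk.
  by left; exists u, k.+1; split => //; split => //; split => // j jk; apply: Hp; lia.
move=> [HR [[u [k [k0 [Hk [cu Hp]]]]]|cp]].
  exists u, k.+1; split => //; split; first by rewrite itS Hk.
  split => // j; rewrite ltnS leq_eqVlt => /orP [/eqP ->|jk]; [by rewrite Hk|exact: Hp].
exists v, 1; split => //; split; first by rewrite itS.
split => // j; rewrite ltnS leqn0 => /eqP -> //.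
Qed.

Lemma Pd_nR v : ~~ Rr S v -> Pd v \/ 0 < cc S v.
Proof.
move=> nR; apply: Classical_Prop.NNPP => Hn.
have [nP c0] : ~ Pd v /\ cc S v = 0.
  by split; [move=> h; apply: Hn; left | case: (posnP (cc S v)) => // h; case: Hn; right].
pose X (x : V) := match x with None => False | Some w =>
   exists k, it k w = v /\ forall j, j < k -> Rr S (it j w) end.
have := tree_conn; apply/negP.
apply: (not_conn_X (X := X) (v := v)).
- move=> i HR; split => /= -[k [Hk Hp]].
    case: k Hk Hp => [|k] Hk Hp; first by rewrite -Hk in nR; case/negP: nR; exact: HR.
    by exists k; split; [rewrite -itSr | move=> j jk; rewrite -itSr; apply: Hp].
  exists k.+1; split; first by rewrite itSr.
  by case => [|j] jk //; rewrite itSr; apply: Hp.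
- move=> w k Hk /= [[|k'] [Hk' Hp]].
    have Ew : w = v := Hk'; subst w; have : 0 < cc S v by apply/cc_pos; exists k.
    by rewrite c0.
  apply: nP; exists w, k'.+1; split => //; split => //; split => //.
  by apply/cc_pos; exists k.
- by exists 0.
Qed.

Lemma tree_cons : consw S sdef.
Proof.
apply/forallP => v; rewrite /loc.
have c1 := cc_le1 v.
have Hs : sdef v + cc S v <= 1.
  case: (ClassicalEpsilon.excluded_middle_informative (Pd v)) => h.
    by rewrite sdef1 // Pd_cc.
  by rewrite sdef0.
case HR: (Rr S v).
  rewrite Hs /=; apply/eqP.
  case: (ClassicalEpsilon.excluded_middle_informative (Pd v)) => h.
    have hS : Pd (ordS v) by apply/Pd_S; split => //; left.
    by rewrite (sdef1 h) (Pd_cc h) (sdef1 hS).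
  rewrite (sdef0 h); case: (posnP (cc S v)) => cp.
    have hS : ~ Pd (ordS v) by move/Pd_S => [_ [//|]]; rewrite cp.
    by rewrite cp (sdef0 hS).
  have hS : Pd (ordS v) by apply/Pd_S; split => //; right.
  rewrite (sdef1 hS); lia.
have hS : ~ Pd (ordS v) by move/Pd_S => []; rewrite HR.
rewrite (sdef0 hS) eqxx andbT.
case: (Pd_nR (negbT HR)) => h.
  by rewrite (sdef1 h) (Pd_cc h).
case: (ClassicalEpsilon.excluded_middle_informative (Pd v)) => h'.
  by rewrite (sdef1 h') (Pd_cc h').
rewrite (sdef0 h'); lia.
Qed.

Lemma tree_nexc (i0 : 'I_n) : ~~ exc S.
Proof.
apply/negP => /andP [_ /forallP Hc].
have := tree_conn; apply/negP.
apply: (not_conn_X (X := fun x => x <> None) (v := i0)) => //.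
move=> v k Hk _; have : 0 < cc S v by apply/cc_pos; exists k.
by rewrite (eqP (Hc v)).
Qed.

End Tree.

Section Uniq.
Variables a n : nat.
Notation E := (wheel_E a n).
Variable S : {set E}.

Lemma cons_allR_exc s : consw S s -> (forall i, Rr S i) -> exc S.
Proof.
move=> Hc HR; apply/andP; split; first by apply/forallP.
apply/forallP => w; rewrite -leqn0 leqNgt; apply/negP => cp.
have n0 : 0 < n by apply: leq_ltn_trans (leq0n _) (ltn_ord w).
have Hle := cons_le Hc w.
have s1 : s (ordS w) = 1 by rewrite (cons_R Hc) //; lia.
have mono : forall k, 1 <= s (it k (ordS w)).
  elim => [|k IH]; first by rewrite s1.
  by rewrite itS (cons_R Hc) //; lia.
have := mono n.-1; rewrite -itSr prednK // it_n; lia.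
Qed.

Lemma consw_unique s1 s2 : consw S s1 -> consw S s2 -> ~~ exc S -> forall v, s1 v = s2 v.
Proof.
move=> H1 H2 nE v.
have [i nR] : exists i, ~~ Rr S i.
  apply: Classical_Prop.NNPP => Hn; case/negP: nE; apply: (cons_allR_exc H1) => i.
  by apply/negPn/negP => h; apply: Hn; exists i.
have step : forall k, s1 (it k (ordS i)) = s2 (it k (ordS i)).
  elim => [|k IH].
    by have [_ ->] := cons_nR H1 nR; have [_ ->] := cons_nR H2 nR.
  rewrite itS; case HR: (Rr S (it k (ordS i))).
    by rewrite (cons_R H1 HR) (cons_R H2 HR) IH.
  by have [_ ->] := cons_nR H1 (negbT HR); have [_ ->] := cons_nR H2 (negbT HR).
by have [k _ <-] := it_cover (ordS i) v.
Qed.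

End Uniq.

Lemma sum_bool (T : finType) (P : pred T) : \sum_(x : T) (P x : nat) = #|[set x | P x]|.
Proof.
rewrite -sum1_card [RHS]big_mkcond; apply: eq_bigr => x _; rewrite inE; by case: (P x).
Qed.

Lemma prod_nat_bool (I : finType) (P : pred I) : \prod_(i : I) (P i : nat) = [forall i, P i].
Proof.
case: (boolP [forall i, P i]) => [/forallP H | /forallPn [i Hi]].
  by rewrite big1 // => i _; rewrite H.
by rewrite (bigD1 i) //= (negbTE Hi) mul0n.
Qed.

Section Count.
Variables a n : nat.
Hypothesis n0 : 0 < n.
Notation E := (wheel_E a n).
Notation ends := (@wheel_ends a n).
Definition i0 : 'I_n := Ordinal n0.

Definition consf (S : {set E}) (f : {ffun 'I_n -> 'I_2}) := consw S (fun v => nat_of_ord (f v)).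

Lemma consw_ext (S : {set E}) s1 s2 : s1 =1 s2 -> consw S s1 = consw S s2.
Proof. by move=> H; apply: eq_forallb => i; rewrite !H. Qed.

Lemma consw_vals (S : {set E}) s v : consw S s -> s v <= 1.
Proof.
move=> Hc; have := forallP Hc (ord_pred v); rewrite ord_predK /loc.
by case: Rr => /andP [h1 /eqP ->] //; lia.
Qed.

Lemma consw_exc (S : {set E}) s : exc S ->
  consw S s = [forall i, (s i <= 1) && (s (ordS i) == s i)].
Proof.
case/andP => /forallP HR /forallP Hc0; apply: eq_forallb => i.
by rewrite /loc HR (eqP (Hc0 i)) addn0.
Qed.

Definition f0 : {ffun 'I_n -> 'I_2} := [ffun _ => ord0].
Definition f1 : {ffun 'I_n -> 'I_2} := [ffun _ => ord_max].

Lemma count_S (S : {set E}) :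
  #|[set f | consf S f]| = spanning_tree ends S + (exc S).*2.
Proof.
case: (boolP (exc S)) => HE.
  have -> : spanning_tree ends S = false.
    by apply/negbTE/negP => HT; move: (tree_nexc HT i0); rewrite HE.
  have -> : [set f | consf S f] = [set f0; f1].
    apply/setP => f; rewrite !inE /consf consw_exc //.
    apply/idP/idP.
      move/forallP => H.
      have Hc : forall k, f (it k i0) = f i0.
        elim => [|k IH] //; rewrite itS; have /andP [_ /eqP h] := H (it k i0).
        by apply: val_inj => /=; rewrite h IH.
      have Hf : f = [ffun _ => f i0].
        apply/ffunP => v; rewrite ffunE; have [k _ <-] := it_cover i0 v; exact: Hc.
      rewrite Hf; case: (f i0) => [[|[|x]] hx] //.
        by apply/orP; left; apply/eqP/ffunP => v; rewrite !ffunE; apply: val_inj.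
      by apply/orP; right; apply/eqP/ffunP => v; rewrite !ffunE; apply: val_inj.
    by case/orP => /eqP ->; apply/forallP => i; rewrite !ffunE.
  rewrite cards2 (_ : f0 != f1) //.
  by apply/negP => /eqP /ffunP /(_ i0); rewrite !ffunE.
rewrite /= addn0.
case: (boolP (spanning_tree ends S)) => HT.
  have Hs := tree_cons HT.
  pose fs : {ffun 'I_n -> 'I_2} := [ffun v => inord (sdef S v)].
  have Hfs : forall v, nat_of_ord (fs v) = sdef S v.
    by move=> v; rewrite ffunE inordK // ltnS (consw_vals v Hs).
  have -> : [set f | consf S f] = [set fs].
    apply/setP => f; rewrite !inE /consf; apply/idP/idP.
      move=> Hf; apply/eqP/ffunP => v; apply: val_inj => /=.
      rewrite Hfs; exact: (consw_unique Hf Hs HE).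
    by move/eqP ->; rewrite (consw_ext _ Hfs).
  by rewrite cards1.
apply/eqP; rewrite cards_eq0; apply/eqP/setP => f; rewrite !inE.
apply/negP => Hf; case/negP: HT; exact: (cons_tree Hf HE).
Qed.

Definition Sall : {set E} := [set e : E | if e is inl _ then true else false].

Lemma exc_Sall (S : {set E}) : exc S = (S == Sall).
Proof.
apply/idP/eqP.
  case/andP => /forallP HR /forallP Hc0; apply/setP => -[i|[v k]]; rewrite inE.
    exact: HR.
  apply/negbTE/negP => H; have : 0 < cc S v by apply/cc_pos; exists k.
  by rewrite (eqP (Hc0 v)).
move=> ->; apply/andP; split; apply/forallP => i; first by rewrite /Rr inE.
rewrite /cc cards_eq0; apply/eqP/setP => k; by rewrite !inE.
Qed.

Lemma sum_count : \sum_(S : {set E}) #|[set f | consf S f]| = (t_wheel a n).+2.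
Proof.
rewrite (eq_bigr _ (fun S _ => count_S S)) big_split /=.
rewrite sum_bool -/(num_spanning_trees ends) -/(t_wheel a n).
have -> : \sum_(S : {set E}) (exc S).*2 = (\sum_(S : {set E}) (exc S : nat)).*2.
  by rewrite -[RHS]muln2 big_distrl /=; apply: eq_bigr => S _; rewrite muln2.
rewrite sum_bool (_ : [set S | exc S] = [set Sall]) ?cards1 ?addn2 //.
by apply/setP => S; rewrite !inE exc_Sall.
Qed.

End Count.

Section Count2.
Variables a n : nat.
Notation E := (wheel_E a n).

Definition Mn (x y : 'I_2) : nat := \sum_(d : bool * {set 'I_a}) (loc d.1 #|d.2| x y : nat).

Definition phi (g : {ffun 'I_n -> bool * {set 'I_a}}) : {set E} :=
  [set e : E | match e with inl i => (g i).1 | inr vk => vk.2 \in (g vk.1).2 end].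
Definition psi (S : {set E}) : {ffun 'I_n -> bool * {set 'I_a}} := [ffun i => (Rr S i, sp S i)].

Lemma phiK : cancel psi phi.
Proof. by move=> S; apply/setP => -[i|[v k]]; rewrite inE ffunE //= inE. Qed.

Lemma psiK : cancel phi psi.
Proof.
move=> g; apply/ffunP => i; rewrite ffunE /Rr /sp inE /=.
case E0: (g i) => [r p] /=; congr pair; apply/setP => k; by rewrite !inE E0.
Qed.

Lemma count_f (f : {ffun 'I_n -> 'I_2}) :
  \sum_(S : {set E}) (consf S f : nat) = \prod_(i : 'I_n) Mn (f i) (f (ordS i)).
Proof.
rewrite (reindex phi) /=; last by exists psi => x _; [apply: psiK | apply: phiK].
rewrite /Mn bigA_distr_bigA /=; apply: eq_bigr => g _.
rewrite prod_nat_bool /consf /consw; congr (nat_of_bool _); apply: eq_forallb => i.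
have -> : Rr (phi g) i = (g i).1 by rewrite /Rr inE.
have -> : cc (phi g) i = #|(g i).2|.
  by rewrite /cc /sp; apply: eq_card => k; rewrite !inE.
by [].
Qed.

Lemma sum_cond (P : nat -> bool) k : (forall c, P c = (c == k)) ->
  \sum_(p : {set 'I_a}) (P #|p| : nat) = 'C(a, k).
Proof.
move=> H; rewrite -[a in 'C(a, _)]card_ord -card_draws -sum_bool; apply: eq_bigr => p _; by rewrite H.
Qed.

Lemma sum_false (P : nat -> bool) : (forall c, P c = false) ->
  \sum_(p : {set 'I_a}) (P #|p| : nat) = 0.
Proof. by move=> H; rewrite big1 // => p _; rewrite H. Qed.

Lemma Mn_split x y : Mn x y = \sum_(p : {set 'I_a}) (loc true #|p| x y : nat)
                             + \sum_(p : {set 'I_a}) (loc false #|p| x y : nat).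
Proof.
by rewrite /Mn -(pair_bigA _ (fun r (p : {set 'I_a}) => (loc r #|p| x y : nat))) big_bool.
Qed.

Definition o0 : 'I_2 := ord0.
Definition o1 : 'I_2 := ord_max.

Lemma Mn00 : Mn o0 o0 = a.+1.
Proof.
rewrite Mn_split (@sum_cond (fun c => loc true c o0 o0) 0) ?(@sum_cond (fun c => loc false c o0 o0) 1)
  ?bin0 ?bin1 ?add1n //; by case=> [|[|c]].
Qed.

Lemma Mn01 : Mn o0 o1 = a.
Proof.
rewrite Mn_split (@sum_cond (fun c => loc true c o0 o1) 1) ?(@sum_false (fun c => loc false c o0 o1))
  ?bin1 ?addn0 //; by case=> [|[|c]].
Qed.

Lemma Mn10 : Mn o1 o0 = 1.
Proof.
rewrite Mn_split (@sum_false (fun c => loc true c o1 o0)) ?(@sum_cond (fun c => loc false c o1 o0) 0)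
  ?bin0 //; by case=> [|[|c]].
Qed.

Lemma Mn11 : Mn o1 o1 = 1.
Proof.
rewrite Mn_split (@sum_cond (fun c => loc true c o1 o1) 0) ?(@sum_false (fun c => loc false c o1 o1))
  ?bin0 ?addn0 //; by case=> [|[|c]].
Qed.

End Count2.

Local Open Scope ring_scope.

Section Split.
Variable T : finType.

Definition fcons k (z : T) (g : {ffun 'I_k -> T}) : {ffun 'I_k.+1 -> T} :=
  [ffun i => if unlift ord0 i is Some j then g j else z].
Definition ftail k (f : {ffun 'I_k.+1 -> T}) : {ffun 'I_k -> T} := [ffun j => f (lift ord0 j)].

Lemma fcons0 k z (g : {ffun 'I_k -> T}) : fcons z g ord0 = z.
Proof. by rewrite ffunE unlift_none. Qed.
Lemma fconsS k z (g : {ffun 'I_k -> T}) j : fcons z g (lift ord0 j) = g j.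
Proof. by rewrite ffunE liftK. Qed.

Lemma sum_ffunS (R : nmodType) k (F : {ffun 'I_k.+1 -> T} -> R) :
  \sum_f F f = \sum_(z : T) \sum_(g : {ffun 'I_k -> T}) F (fcons z g).
Proof.
rewrite pair_bigA /=.
rewrite (reindex (fun p : T * {ffun 'I_k -> T} => fcons p.1 p.2)) //=.
exists (fun f : {ffun 'I_k.+1 -> T} => (f ord0, ftail f)) => [[z g] _ | f _] /=.
  congr pair; first exact: fcons0.
  by apply/ffunP => j; rewrite ffunE fconsS.
apply/ffunP => i; rewrite ffunE; case: unliftP => [j ->| ->] //.
by rewrite ffunE.
Qed.
End Split.

Section Walk.
Variables (m : nat) (A : 'M[int]_m.+1).

Definition Qw k (x y : 'I_m.+1) : int :=
  \sum_(f : {ffun 'I_k.+1 -> 'I_m.+1}) (f ord0 == x)%:R *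
    \prod_(i < k.+1) A (f i) (if i == ord_max then y else f (ordS i)).

Lemma ordS_lift0 k (j : 'I_k.+1) : j != ord_max ->
  ordS (lift ord0 j) = lift ord0 (ordS j) :> 'I_k.+2.
Proof.
move=> jm; apply: val_inj => /=.
have jk : (j < k)%N by move: jm (ltn_ord j); rewrite -val_eqE /=; lia.
rewrite /bump /= !add1n !modn_small //; lia.
Qed.

Lemma lift0_max k (j : 'I_k.+1) : (lift ord0 j == ord_max :> 'I_k.+2) = (j == ord_max).
Proof. by rewrite -!val_eqE /= /bump /= add1n eqSS. Qed.

Lemma sum_pick (F : 'I_m.+1 -> int) x : \sum_z (z == x)%:R * F z = F x.
Proof.
rewrite (bigD1 x) //= eqxx mul1r big1 ?addr0 // => z /negbTE ->; by rewrite mul0r.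
Qed.

Lemma Qw_expr k x y : Qw k x y = (A ^+ k.+1) x y.
Proof.
elim: k x y => [|k IH] x y.
  rewrite /Qw sum_ffunS expr1.
  under eq_bigr => z _ do under eq_bigr => g _ do rewrite big_ord1 fcons0 (_ : ord0 == ord_max = true) //.
  under eq_bigr => z _ do rewrite sumr_const card_ffun !card_ord expn0.
  by rewrite -(sum_pick (fun z => A z y)).
rewrite exprS -mulmxE mxE.
under [RHS]eq_bigr => z _ do rewrite -IH /Qw mulr_sumr.
rewrite exchange_big /=.
rewrite /Qw sum_ffunS.
under [LHS]eq_bigr => z _ do under eq_bigr => g _ do rewrite (fcons0 z g).
under [LHS]eq_bigr => z _ do rewrite -mulr_sumr.
rewrite sum_pick; apply: eq_bigr => g _.
rewrite (eq_bigr (fun i => (i == g ord0)%:R * (A x i *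
   \prod_(i0 < k.+1) A (g i0) (if i0 == ord_max then y else g (ordS i0))))); last first.
  by move=> i _; rewrite mulrCA eq_sym.
rewrite sum_pick big_ord_recl fcons0 (_ : (ord0 == ord_max :> 'I_k.+2) = false) //.
rewrite (_ : ordS ord0 = lift ord0 (ord0 : 'I_k.+1)); last by apply: val_inj => /=; rewrite modn_small.
rewrite fconsS; congr (_ * _); apply: eq_bigr => j _.
rewrite fconsS lift0_max; case: eqP => // /eqP jm.
by rewrite ordS_lift0 // fconsS.
Qed.

Lemma trace_walk k : \tr (A ^+ k.+1) =
  \sum_(f : {ffun 'I_k.+1 -> 'I_m.+1}) \prod_(i < k.+1) A (f i) (f (ordS i)).
Proof.
rewrite /mxtrace; under eq_bigr => x _ do rewrite -Qw_expr /Qw.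
rewrite exchange_big /=; apply: eq_bigr => f _.
rewrite (eq_bigr (fun x => (x == f ord0)%:R * \prod_(i < k.+1) A (f i) (if i == ord_max then x else f (ordS i)))); last first.
  by move=> x _; rewrite eq_sym.
rewrite sum_pick; apply: eq_bigr => i _.
case: eqP => // ->; congr (A _ (f _)); apply: val_inj => /=; by rewrite modnn.
Qed.


End Walk.

Local Open Scope ring_scope.

Section Alg.
Variable a : nat.

Definition Mz : 'M[int]_2 :=
  \matrix_(x, y) (if x == o0 then (if y == o0 then (a.+1)%:R else a%:R) else 1).

Lemma ord2 (x : 'I_2) : x = o0 \/ x = o1.
Proof. case: x => [[|[|x]] hx] //; [left | right]; exact: val_inj. Qed.

Lemma Mz_eq x y : ((Mn a x y)%:R : int) = Mz x y.
Proof.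
rewrite mxE; case: (ord2 x) => ->; case: (ord2 y) => ->.
- by rewrite Mn00.
- by rewrite Mn01.
- by rewrite Mn10.
- by rewrite Mn11.
Qed.

Lemma count_trace n : (0 < n)%N -> ((t_wheel a n).+2)%:R = \tr (Mz ^+ n) :> int.
Proof.
case: n => // k _.
rewrite trace_walk -(sum_count (n := k.+1) a (ltn0Sn k)).
under eq_bigr => S _ do rewrite -sum_bool.
rewrite exchange_big /=.
under eq_bigr => f _ do rewrite count_f.
rewrite natr_sum; apply: eq_bigr => f _; rewrite natr_prod; apply: eq_bigr => i _.
exact: Mz_eq.
Qed.

Lemma CH : Mz * Mz = (a%:R + 2) *: Mz - 1.
Proof.
apply/matrixP => i j; rewrite -mulmxE !mxE !big_ord_recl big_ord0 !mxE.
case: (ord2 i) => ->; case: (ord2 j) => -> /=; rewrite ?mxE /=; ring.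
Qed.

Definition Tr k := \tr (Mz ^+ k).

Lemma Tr_rec k : Tr k.+2 = (a%:R + 2) * Tr k.+1 - Tr k.
Proof.
rewrite /Tr !exprSr -mulrA CH mulrBr mulr1 -scalerAr -exprSr raddfB /= mxtraceZ.
by [].
Qed.

Lemma Tr0 : Tr 0 = 2.
Proof. by rewrite /Tr expr0 /mxtrace !big_ord_recl big_ord0 !mxE. Qed.

Lemma Tr1 : Tr 1 = a%:R + 2.
Proof. rewrite /Tr expr1 /mxtrace !big_ord_recl big_ord0 !mxE /=; ring. Qed.

Lemma Tr_W k : Tr k.+1 - 2 = a%:R * (Wpoly k).[a%:R] /\ Tr k.+2 - 2 = a%:R * (Wpoly k.+1).[a%:R].
Proof.
elim: k => [|k [IH1 IH2]].
  rewrite Tr_rec Tr1 Tr0 (_ : Wpoly 0 = 1) // (_ : Wpoly 1 = 'X + 4%:P) // -polyC1 hornerD hornerX !hornerC; split; ring.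
split => //.
rewrite Tr_rec.
have -> : Wpoly k.+2 = ('X + 2%:P) * Wpoly k.+1 - Wpoly k + 2%:P by [].
rewrite !(hornerD, hornerN, hornerM, hornerX, hornerC).
have h1 : Tr k.+2 = a%:R * (Wpoly k.+1).[a%:R] + 2 by rewrite -IH2; ring.
have h2 : Tr k.+1 = a%:R * (Wpoly k).[a%:R] + 2 by rewrite -IH1; ring.
rewrite h1 h2; ring.
Qed.

End Alg.

Lemma lucas_rec k : (lucas (2 * k.+2) + lucas (2 * k) = 3 * lucas (2 * k.+1))%N.
Proof.
have -> : (2 * k.+2 = (2 * k).+4)%N by lia.
have -> : (2 * k.+1 = (2 * k).+2)%N by lia.
rewrite /=; lia.
Qed.

Lemma Tr_lucas k : Tr 1 k = (lucas (2 * k))%:R.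
Proof.
have : Tr 1 k = (lucas (2 * k))%:R /\ Tr 1 k.+1 = (lucas (2 * k.+1))%:R.
  elim: k => [|k [IH1 IH2]]; first by rewrite Tr0 Tr1.
  split => //; rewrite Tr_rec IH1 IH2.
  have := lucas_rec k => /(congr1 (fun m : nat => m%:R : int)); rewrite natrD natrM => h.
  rewrite (_ : (lucas (2 * k.+2))%:R = 3 * (lucas (2 * k.+1))%:R - (lucas (2 * k))%:R :> int).
    by rewrite (_ : (1%:R : int) + 2 = 3) //.
  by rewrite -h; ring.
by case.
Qed.

Local Open Scope ring_scope.

Theorem theorem5p10 :
  (forall a n : nat, (1 <= a)%N -> (2 <= n)%N ->
     (t_wheel a n)%:Z = a%:Z * (Wpoly n.-1).[a%:Z]) /\
  (forall n : nat, (2 <= n)%N ->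
     (t_wheel 1 n)%:Z = (lucas (2 * n))%:Z - 2).
Proof.
split.
  move=> a [|k] // _ _ /=.
  have h := count_trace a (ltn0Sn k); rewrite -/(Tr a k.+1) in h; have [h1 _] := Tr_W a k.
  rewrite -[(t_wheel a k.+1)%:Z]natz -[a%:Z]natz -h1 -h -addn2 natrD; ring.
move=> [|k] // _.
have h := count_trace 1 (ltn0Sn k); rewrite -/(Tr 1 k.+1) Tr_lucas -addn2 natrD in h.
rewrite -[(t_wheel 1 k.+1)%:Z]natz -[(lucas _)%:Z]natz -h; ring.
Qed.
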